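(* Let $G$ be a $6$-regular graph, $\mathcal S$ a canonical path partition of $G$, and $P$ a path component with end-vertices $o_1,o_2$. Let $x_1,x_2\in V_2$ be path neighbors on $P$, with $x_1$ immediately preceding $x_2$ when $P$ is traversed from $o_1$ to $o_2$. If $x_1$ goes to $o_1$, then every vertex that $x_2$ goes to is either $o_1$, $o_2$, or a vertex of a cycle component (i.e., $x_2$ goes to no end-vertex of a path component other than $P$).
   Context: All graphs are finite, simple and undirected. A path partition of $G=(V,E)$ is a set of vertex-disjoint paths (single vertices allowed) covering $V$; its members are components. A component with $t\ge3$ vertices is a cycle component if the subgraph induced on its vertex set has a spanning cycle; a one-vertex component is an isolated vertex; every other component is a path component. A path partition is canonical if (1) it has the minimum number of components among all path partitions of $G$; (2) among those, it has the maximum number of cycle components; (3) it has no isolated vertices. Given a canonical path partition $\mathcal S$ of $G$: two vertices are path neighbors if they are consecutive on a path component. An edge of $G$ is a free edge unless it joins two path neighbors or has both endpoints in the same cycle component. $V_1$ is the set of end-vertices of path components together with all vertices of cycle components. $V_2$ is the set of vertices not in $V_1$ that are joined by a free edge to a vertex of $V_1$. A balanced edge is a free edge with one endpoint in $V_1$ and the other in $V_2$; for $x\in V_2$, $y\in V_1$ we say $x$ goes to $y$ if $xy$ is a balanced edge. *)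

(* Defs.v *)
(* A simple graph is a symmetric irreflexive relation e on a finType T. *)
From mathcomp Require Import all_boot.
Set Implicit Arguments. Unset Strict Implicit. Unset Printing Implicit Defensive.

Section PathPartitions.
Variables (T : finType) (e : rel T).

Definition gpath (s : seq T) : bool :=
  if s is x :: p then path e x p else false.

Definition path_partition (S : seq (seq T)) : bool :=
  [&& all gpath S, uniq (flatten S) & [forall x, x \in flatten S]].

(* cycle component: >= 3 vertices, and the induced subgraph on its vertex set
   has a spanning cycle (some ordering of its vertices is an e-cycle) *)
Definition cycle_comp (s : seq T) : bool :=
  (2 < size s) && has (fun c => cycle e c) (permutations s).

Definition isolated_comp (s : seq T) : bool := size s == 1.
Definition path_comp (s : seq T) : bool := (1 < size s) && ~~ cycle_comp s.

Definition ncycles (S : seq (seq T)) : nat := count cycle_comp S.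

Definition canonical_pp (S : seq (seq T)) : Prop :=
  [/\ path_partition S,
      (forall S', path_partition S' -> size S <= size S'),
      (forall S', path_partition S' -> size S' = size S -> ncycles S' <= ncycles S)
    & all (fun s => ~~ isolated_comp s) S].

Variable S : seq (seq T).

Definition path_nbrs (x y : T) : Prop :=
  exists2 s, s \in S & path_comp s /\
    exists p1 p2, s = p1 ++ x :: y :: p2 \/ s = p1 ++ y :: x :: p2.

Definition same_cycle (x y : T) : Prop :=
  exists2 s, s \in S & [&& cycle_comp s, x \in s & y \in s].

Definition free_edge (x y : T) : Prop :=
  [/\ e x y, ~ path_nbrs x y & ~ same_cycle x y].

Definition in_cycle_comp (v : T) : Prop :=
  exists2 s, s \in S & cycle_comp s && (v \in s).

Definition path_end (v : T) : Prop :=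
  exists2 s, s \in S & path_comp s && ((v == head v s) || (v == last v s)).

Definition inV1 (v : T) : Prop := path_end v \/ in_cycle_comp v.

Definition inV2 (x : T) : Prop :=
  ~ inV1 x /\ exists y, inV1 y /\ free_edge x y.

Definition balanced (x y : T) : Prop :=
  free_edge x y /\ ((inV1 x /\ inV2 y) \/ (inV2 x /\ inV1 y)).

Definition goes_to (x y : T) : Prop := [/\ inV2 x, inV1 y & balanced x y].

End PathPartitions.

(* Main.v *)
Require Import Defs.
From mathcomp Require Import all_boot.

Lemma rev_ok (T : eqType) (e : rel T) (e_sym : symmetric e) (x : T) (p : seq T) :
  path e x p -> exists z zs, [/\ path e z zs, perm_eq (z::zs) (x::p) & last z zs = x].
Proof.
move=> Hp.
exists (last x p), (rev (belast x p)).
have Heq : last x p :: rev (belast x p) = rev (x :: p).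
  by rewrite [in RHS]lastI rev_rcons.
split.
- rewrite rev_path.
  by rewrite (@eq_path _ _ e) // => a b; rewrite /= e_sym.
- by rewrite Heq perm_rev.
- have : last x p :: rev (belast x p) = rcons (rev p) x by rewrite Heq rev_cons.
  move=> H; rewrite -[last _ (rev _)]/(last x (last x p :: rev (belast x p))).
  by rewrite H last_rcons.
Qed.

Theorem mainTheorem7 (T : finType) (e : rel T)
  (e_sym : symmetric e) (e_irr : irreflexive e)
  (e_reg6 : forall v : T, #|[set u | e v u]| = 6)
  (S : seq (seq T)) (HS : canonical_pp e S)
  (P : seq T) (HPS : P \in S) (HPpath : path_comp e P)
  (o1 o2 x1 x2 : T)
  (Hends : exists mid, P = o1 :: rcons mid o2)
  (Hx : exists p1 p2, P = p1 ++ x1 :: x2 :: p2)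
  (Hx1 : inV2 e S x1) (Hx2 : inV2 e S x2)
  (Hgo : goes_to e S x1 o1) :
  forall y : T, goes_to e S x2 y ->
    y = o1 \/ y = o2 \/ in_cycle_comp e S y.
Proof.
move=> y [_ Hy1 [[exy _ _] _]].
case: Hy1 => [Hend|Hc]; last by right; right.
case: (eqVneq y o1) => [->|yo1]; first by left.
case: (eqVneq y o2) => [->|yo2]; first by right; left.
exfalso.
case: HS => [Hpp _ Hmax _].
case: Hends => mid HP.
case: Hx => p1 [p2 HP2].
case: Hgo => _ _ [[ex1o1 Hnb _] _].
case: Hx1 => Hnv1 _.
case: p1 HP2 => [|z p1'] HP2.
  apply: Hnv1; left; exists P => //; rewrite HPpath /=.
  by rewrite HP2 /= eqxx.
have Hz : z = o1 by move: HP2; rewrite HP => -[].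
subst z.
have Hp1' : p1' != [::].
  apply/eqP=> E; subst p1'; apply: Hnb; exists P => //; split => //.
  by exists [::], (x2 :: p2); right.
case/andP: Hpp => Hallg /andP [Huniq Hcov].
have gP : gpath e P by move/allP: Hallg; apply.
move: gP; rewrite HP2 /= cat_path /= => /and3P [Hp1path ex12 Hp2path].
case/andP: Hp2path => _ Hp2path.
case: Hend => Q HQS /andP [HQpath Hyq].
have gQ : gpath e Q by move/allP: Hallg; apply.
have HQP : Q != P.
  apply/eqP => E; subst Q.
  case/orP: Hyq; rewrite HP /=.
    by rewrite (negbTE yo1).
  by rewrite last_rcons (negbTE yo2).
case: Q HQS HQpath Hyq gQ HQP => [|q qs] HQS HQpath Hyq gQ HQP; first done.
have [q0 [qs0 [Hq0path Hq0perm Hq0last]]] :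
  exists q0 qs0, [/\ path e q0 qs0, perm_eq (q0::qs0) (q::qs) & last q0 qs0 = y].
  case/orP: Hyq => /eqP Hy.
    have [z [zs [H1 H2 H3]]] := rev_ok _ _ e_sym _ _ gQ.
    by exists z, zs; split => //; rewrite H3 Hy.
  by exists q, qs; split => //; rewrite Hy.
set C := o1 :: rcons p1' x1.
set Q' := q0 :: qs0 ++ x2 :: p2.
have [R HR] : exists R, perm_eq S (P :: (q :: qs) :: R).
  have H1 := perm_to_rem HPS.
  have HQin : (q :: qs) \in rem P S.
    by move: HQS; rewrite (perm_mem H1) inE (negbTE HQP).
  exists (rem (q :: qs) (rem P S)).
  by apply: (perm_trans H1); rewrite perm_cons; apply: perm_to_rem.
set S' := C :: Q' :: R.
have HflatP : P = C ++ x2 :: p2 by rewrite HP2 /C /= cat_rcons.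
have Hflat : perm_eq (flatten S') (flatten S).
  apply: (@perm_trans _ (flatten (P :: (q :: qs) :: R))); last by rewrite perm_sym; apply: perm_flatten.
  have -> : flatten S' = C ++ Q' ++ flatten R by [].
  have -> : flatten (P :: (q::qs) :: R) = P ++ (q::qs) ++ flatten R by [].
  rewrite HflatP -catA perm_cat2l.
  have -> : Q' = (q0 :: qs0) ++ (x2 :: p2) by [].
  rewrite -catA perm_catCA perm_cat2l perm_cat2r.
  exact: Hq0perm.
have Hpp' : path_partition e S'.
  apply/and3P; split.
  - rewrite (perm_all _ HR) in Hallg.
    have -> : all (gpath e) S' = [&& gpath e C, gpath e Q' & all (gpath e) R] by [].
    have HR' : all (gpath e) R by case/and3P: Hallg.
    rewrite HR' andbT.
    apply/andP; split.
      by rewrite /C /= rcons_path Hp1path.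
    by rewrite /Q' /= cat_path Hq0path /= Hq0last e_sym exy.
  - by rewrite (perm_uniq Hflat).
  - apply/forallP => v; rewrite (perm_mem Hflat).
    by move/forallP: Hcov.
have Hsize : size S' = size S by rewrite (perm_size HR).
have := Hmax S' Hpp' Hsize.
rewrite /ncycles.
have -> : count (cycle_comp e) S = count (cycle_comp e) (P :: (q :: qs) :: R).
  by move/permP: HR; apply.
have HCc : cycle_comp e C.
  apply/andP; split.
    by rewrite /C /= size_rcons; move: Hp1'; case: (p1').
  apply/hasP; exists C; first by rewrite mem_permutations.
  by rewrite /C /= !rcons_path last_rcons Hp1path ex12 ex1o1.
case/andP: HPpath => _ /negbTE HPc.
case/andP: HQpath => _ /negbTE HQc.
rewrite /S' /= HCc HPc HQc /=.
by rewrite !add0n addnA -[X in _ <= X]add0n leq_add2r add1n.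
Qed.
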